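(* Let $a,b,c,d\in\mathbb C$ with $a\notin\mathbb Z$ and $d\notin\{0,-1,-2,\dots\}$. Then, as an identity of formal power series in $x,y$, $$\mathrm H_{11}(a,b,c;d;x,y)={}_1F_1(a;d;x)\,F(b,c;1-a;-y)+\sum_{k=1}^\infty\sum_{l=1}^k\frac{(-1)^{k+l}(k-1)!}{(l-1)!\,l!\,(k-l)!}\,\frac{(b)_l(c)_l}{(1-a)_l(d)_k}\,x^ky^l\,{}_1F_1(a+k;d+k;x)\,F(b+l,c+l;1-a+l;-y).$$
   Context: Pochhammer symbol: $(\lambda)_k=\Gamma(\lambda+k)/\Gamma(\lambda)$ for every integer $k$ (possibly negative) whenever defined; $(\lambda)_0=1$. $F(a,b;c;x)=\sum_{k\ge0}\frac{(a)_k(b)_k}{(c)_k k!}x^k$, ${}_1F_1(a;c;x)=\sum_{k\ge0}\frac{(a)_k}{(c)_k k!}x^k$. Confluent Horn function $\mathrm H_{11}(a,b,c;d;x,y)=\sum_{p,q\ge0}\frac{(a)_{p-q}(b)_q(c)_q}{(d)_p\,p!\,q!}x^py^q$. All functions are regarded as formal power series in $x,y$; the infinite double sum converges in the formal (degree) topology. *)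

(* Defs.v *)
From HB Require Import structures.
From mathcomp Require Import all_boot all_order all_algebra.
Set Implicit Arguments. Unset Strict Implicit. Unset Printing Implicit Defensive.
Import Order.TTheory GRing.Theory Num.Theory.
Local Open Scope ring_scope.

Section Defs.
Variable C : numClosedFieldType.

(* Pochhammer symbol with integer index: (a)_k = Gamma(a+k)/Gamma(a).
   For k = n >= 0 : a (a+1) ... (a+n-1).
   For k = -(n+1) (Negz n) : 1 / ((a-1)(a-2)...(a-(n+1))). *)
Definition poch (a : C) (k : int) : C :=
  match k with
  | Posz n => \prod_(i < n) (a + i%:R)
  | Negz n => (\prod_(i < n.+1) (a - (i.+1)%:R))^-1
  end.

(* formal power series in one variable, and in two variables x,y,
   given by their coefficient functions: f k = [t^k] f, g p q = [x^p y^q] g *)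
Definition fps1 := nat -> C.
Definition fps2 := nat -> nat -> C.

Definition F11 (a c : C) : fps1 :=
  fun k => poch a k / (poch c k * (k`!)%:R).

Definition F21 (a b c : C) : fps1 :=
  fun k => poch a k * poch b k / (poch c k * (k`!)%:R).

Definition fneg (f : fps1) : fps1 := fun k => (-1) ^+ k * f k.

Definition in_x (f : fps1) : fps2 := fun p q => if q == 0%N then f p else 0.
Definition in_y (f : fps1) : fps2 := fun p q => if p == 0%N then f q else 0.

Definition mono (c : C) (k l : nat) : fps2 :=
  fun p q => if (p == k) && (q == l) then c else 0.

Definition fadd (f g : fps2) : fps2 := fun p q => f p q + g p q.

Definition fmul (f g : fps2) : fps2 :=
  fun p q => \sum_(i < p.+1) \sum_(j < q.+1) f i j * g (p - i)%N (q - j)%N.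

(* convergence in the formal (degree) topology: every coefficient of the
   sequence is eventually constant, equal to that of the limit *)
Definition fps_lim (P : nat -> fps2) (S : fps2) : Prop :=
  forall p q, exists N, forall n, (N <= n)%N -> P n p q = S p q.

Definition H11 (a b c d : C) : fps2 :=
  fun p q => poch a (p%:Z - q%:Z) * poch b q * poch c q
             / (poch d p * (p`!)%:R * (q`!)%:R).

Definition term (a b c d : C) (k l : nat) : fps2 :=
  fmul (mono ((-1) ^+ (k + l) * ((k.-1)`!)%:R
               / (((l.-1)`!)%:R * (l`!)%:R * ((k - l)`!)%:R)
               * (poch b l * poch c l / (poch (1 - a) l * poch d k))) k l)
       (fmul (in_x (F11 (a + k%:R) (d + k%:R)))
             (in_y (fneg (F21 (b + l%:R) (c + l%:R) (1 - a + l%:R))))).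

Definition partial (a b c d : C) (n : nat) : fps2 :=
  fun p q => \sum_(1 <= k < n.+1) \sum_(1 <= l < k.+1) term a b c d k l p q.

End Defs.

(* Main.v *)
Require Import Defs.
From HB Require Import structures.
From mathcomp Require Import all_boot all_order all_algebra.
From mathcomp Require Import ring lra.
Import Order.TTheory GRing.Theory Num.Theory.
Local Open Scope ring_scope.

Lemma pochS (C : numClosedFieldType) (x : C) (n : nat) :
  poch x n.+1 = poch x n * (x + n%:R).
Proof. by rewrite /= big_ord_recr. Qed.

Lemma poch0 (C : numClosedFieldType) (x : C) : poch x 0 = 1.
Proof. by rewrite /= big_ord0. Qed.

Lemma poch_add (C : numClosedFieldType) (x : C) (m n : nat) :
  poch x (m + n)%N = poch x m * poch (x + m%:R) n.
Proof.
elim: n => [|n IH]; first by rewrite addn0 poch0 mulr1.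
by rewrite addnS !pochS IH natrD addrA mulrA.
Qed.

Lemma poch_neq0 (C : numClosedFieldType) (x : C) (n : nat) :
  (forall i : nat, x + i%:R != 0) -> poch x n != 0.
Proof. by move=> h; apply/prodf_neq0 => i _. Qed.

Lemma poch_rev (C : numClosedFieldType) (y : C) (n : nat) :
  poch y n = (-1) ^+ n * poch (1 - y - n%:R) n.
Proof.
have E : (-1 : C) ^+ n = \prod_(i < n) (-1) by rewrite prodr_const card_ord.
rewrite /poch E -big_split (reindex_inj rev_ord_inj).
apply: eq_bigr => i _ /=.
have h : (n - i.+1)%:R = n%:R - (i.+1)%:R :> C by rewrite natrB.
rewrite h -addn1 natrD; ring.
Qed.

Lemma sgn_sq (C : numClosedFieldType) (n : nat) : (-1 : C) ^+ n * (-1) ^+ n = 1.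
Proof. by rewrite -expr2 sqrr_sign. Qed.

Lemma poch_int (C : numClosedFieldType) (a : C) (p q : nat) :
  (forall n : nat, 1 - a + n%:R != 0) ->
  poch a (p%:Z - q%:Z) * poch (1 - a) q = (-1) ^+ q * poch (a - q%:R) p.
Proof.
move=> ha.
case: (leqP q p) => hqp.
  rewrite -(subnKC hqp); set m := (p - q)%N.
  have -> : ((q + m)%N%:Z - q%:Z) = m%:Z by rewrite PoszD addrAC subrr add0r.
  rewrite poch_add subrK (@poch_rev C (a - q%:R)).
  have -> : 1 - (a - q%:R) - q%:R = 1 - a by ring.
  by rewrite !mulrA sgn_sq mul1r mulrC.
have [m ->] : exists m, q = (p + m.+1)%N.
  by exists (q - p).-1; rewrite prednK ?subn_gt0 // subnKC // ltnW.
have -> : (p%:Z - (p + m.+1)%N%:Z) = Negz m.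
  by rewrite PoszD opprD addrA subrr add0r NegzE.
rewrite addnC poch_add (@poch_rev C (1 - a + m.+1%:R)).
have -> : 1 - (1 - a + m.+1%:R) - p%:R = a - (m.+1 + p)%N%:R by rewrite natrD; ring.
have E : poch (1 - a) m.+1 = (-1) ^+ m.+1 * \prod_(i < m.+1) (a - i.+1%:R).
  have E : (-1 : C) ^+ m.+1 = \prod_(i < m.+1) (-1) by rewrite prodr_const card_ord.
  rewrite /poch E -big_split; apply: eq_bigr => i _ /=.
  rewrite -natr1; ring.
rewrite E /=.
have nz : \prod_(i < m.+1) (a - i.+1%:R) != 0.
  apply/prodf_neq0 => i _.
  have := ha i; apply: contra => /eqP h.
  apply/eqP; rewrite -oppr0 -h -natr1; ring.
rewrite exprD; field.
exact: nz.
Qed.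

Lemma poch1l (C : numClosedFieldType) (x : C) (i : nat) :
  poch x i.+1 = x * poch (x + 1) i.
Proof.
by rewrite -add1n poch_add /= big_ord1 /= addr0.
Qed.

Lemma chu_vandermonde (C : numClosedFieldType) (p : nat) : forall (x a : C),
  (forall n : nat, a + n%:R != 0) ->
  \sum_(k < p.+1) (-1) ^+ k * ('C(p, k))%:R * poch x k / poch a k
  = poch (a - x) p / poch a p.
Proof.
elim: p => [|p IH] x a ha.
  by rewrite big_ord1 /= !big_ord0 bin0 expr0 !mul1r.
have ha1 : forall n : nat, a + 1 + n%:R != 0.
  move=> n; have -> : a + 1 + n%:R = a + n.+1%:R by rewrite -natr1; ring.
  exact: ha.
have a0 : a != 0 by have := ha 0%N; rewrite addr0.
rewrite big_ord_recl.
under eq_bigr => i _ do rewrite lift0 binS natrD poch1l (@poch1l C a).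
have -> : \sum_(i < p.+1) (-1) ^+ i.+1 * ('C(p, i.+1)%:R + 'C(p, i)%:R) *
      (x * poch (x + 1) i) / (a * poch (a + 1) i)
  = \sum_(i < p.+1) (-1) ^+ i.+1 * ('C(p, i.+1))%:R * poch x i.+1 / poch a i.+1
    - x / a * \sum_(i < p.+1) (-1) ^+ i * ('C(p, i))%:R * poch (x + 1) i / poch (a + 1) i.
  rewrite mulr_sumr -sumrB; apply: eq_bigr => i _.
  rewrite !poch1l exprS.
  have : poch (a + 1) i != 0 by apply: poch_neq0.
  move=> h; field; by rewrite a0 h.
rewrite IH // addrA.
have -> : (-1) ^+ 0 * 'C(p.+1, 0)%:R * poch x 0 / poch a 0 +
   \sum_(i < p.+1) (-1) ^+ i.+1 * 'C(p, i.+1)%:R * poch x i.+1 / poch a i.+1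
   = \sum_(k < p.+1) (-1) ^+ k * 'C(p, k)%:R * poch x k / poch a k.
  have E : \sum_(k < p.+2) (-1) ^+ k * 'C(p, k)%:R * poch x k / poch a k
     = (-1) ^+ 0 * 'C(p, 0)%:R * poch x 0 / poch a 0 +
   \sum_(i < p.+1) (-1) ^+ i.+1 * 'C(p, i.+1)%:R * poch x i.+1 / poch a i.+1.
    by rewrite big_ord_recl.
  rewrite !bin0 in E *; rewrite -E.
  by rewrite big_ord_recr /= bin_small // mulr0 mul0r mul0r addr0.
rewrite IH //.
have -> : a + 1 - (x + 1) = a - x by ring.
have hB : poch (a + 1) p != 0 by apply: poch_neq0.
have hp : a + p%:R != 0 by apply: ha.
have hA : poch a p = a * poch (a + 1) p / (a + p%:R).
  have := @pochS C a p; rewrite poch1l => E.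
  rewrite E; field; exact: hp.
rewrite !pochS hA; field.
by rewrite a0 hB hp.
Qed.

Lemma inner_sum (q k : nat) : (0 < k)%N ->
  (\sum_(1 <= l < k.+1) 'C(q, l) * 'C(k.-1, l.-1) = 'C(q + k.-1, k))%N.
Proof.
case: k => [//|k] _ /=.
rewrite -(binomial.Vandermonde q k k.+1) big_ord_recl /=.
rewrite subn0 (bin_small (ltnSn k)) muln0 add0n.
rewrite big_add1 /= big_mkord; apply: eq_bigr => i _.
by rewrite /bump /= add1n subSS bin_sub // -ltnS.
Qed.

Lemma poch_fact (C : numClosedFieldType) (q k : nat) :
  poch (q.+1%:R : C) k * (q`!)%:R = ((q + k)`!)%:R.
Proof.
elim: k => [|k IH]; first by rewrite poch0 mul1r addn0.
by rewrite pochS mulrAC IH addnS factS natrM -natrD addSn mulrC.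
Qed.

Lemma poch_nat (C : numClosedFieldType) (q k : nat) :
  poch (q%:R : C) k = ((k`! * 'C(q + k.-1, k))%:R).
Proof.
case: q => [|q].
  case: k => [|k]; first by rewrite poch0.
  rewrite bin_small ?muln0 // poch1l mul0r mulr0n; reflexivity.
apply: (@mulIf _ (q`!)%:R); first by rewrite pnatr_eq0 -lt0n fact_gt0.
rewrite poch_fact -natrM -mulnA.
case: k => [|k]; first by rewrite /= bin0 addn0 fact0 !mul1n.
rewrite /= addSnnS -(bin_fact (leq_addl q k.+1)) addnK.
by rewrite mulnCA.
Qed.

Lemma sum_pick (C : numClosedFieldType) (n k : nat) (F : nat -> C) :
  \sum_(i < n) (if (i == k :> nat) then F i else 0) = if (k < n)%N then F k else 0.
Proof.
elim: n => [|n IH]; first by rewrite big_ord0.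
rewrite big_ord_recr /= IH.
case: (ltngtP k n) => h.
- by rewrite addr0 ltnS ltnW.
- by rewrite addr0 ltnS leqNgt h.
- by rewrite add0r h ltnSn.
Qed.

Lemma fmul_xy (C : numClosedFieldType) (f g : fps1 C) (p q : nat) :
  fmul (in_x f) (in_y g) p q = f p * g q.
Proof.
rewrite /fmul.
transitivity (\sum_(i < p.+1) (if (i == p :> nat) then f p * g q else 0)).
  apply: eq_bigr => i _.
  have [hip|hi] := eqVneq (i : nat) p.
    rewrite hip big_ord_recl /in_x /in_y /= subnn subn0 eqxx.
    rewrite big1 ?addr0 // => j _; by rewrite mul0r.
  apply: big1 => j _; rewrite /in_x /in_y.
  case: (j == 0%N :> nat); last by rewrite mul0r.
  have : (p - i)%N != 0%N by rewrite subn_eq0 -ltnNge ltn_neqAle hi /= -ltnS ltn_ord.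
  by move/negbTE => ->; rewrite mulr0.
by rewrite (@sum_pick C p.+1 p (fun _ => f p * g q)) ltnSn.
Qed.

Lemma fmul_mono (C : numClosedFieldType) (c : C) (k l : nat) (h : fps2 C) (p q : nat) :
  fmul (mono c k l) h p q = if (k <= p)%N && (l <= q)%N then c * h (p - k)%N (q - l)%N else 0.
Proof.
rewrite /fmul /mono.
transitivity (\sum_(i < p.+1) (if (i == k :> nat) then
   \sum_(j < q.+1) (if (j == l :> nat) then c * h (p - i)%N (q - j)%N else 0) else 0)).
  apply: eq_bigr => i _; case: (i == k :> nat); last first.
    by apply: big1 => j _; rewrite mul0r.
  by apply: eq_bigr => j _ /=; case: (j == l :> nat); rewrite ?mul0r.
rewrite (@sum_pick C p.+1 k (fun i => \sum_(j < q.+1)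
   (if (j == l :> nat) then c * h (p - i)%N (q - j)%N else 0))).
rewrite (@sum_pick C q.+1 l (fun j => c * h (p - k)%N (q - j)%N)) !ltnS.
by case: (k <= p)%N; case: (l <= q)%N.
Qed.

Definition Kc {C : numClosedFieldType} (a b c d : C) (p q : nat) : C :=
  (-1) ^+ q * poch b q * poch c q * poch a p /
  (poch (1 - a) q * poch d p * (p`!)%:R * (q`!)%:R).

Lemma fact_neq0 (C : numClosedFieldType) (n : nat) : (n`!)%:R != 0 :> C.
Proof. by rewrite pnatr_eq0 -lt0n fact_gt0. Qed.

Lemma bin_neq0 (C : numClosedFieldType) (n m : nat) : (m <= n)%N -> ('C(n, m))%:R != 0 :> C.
Proof. by move=> h; rewrite pnatr_eq0 -lt0n bin_gt0. Qed.

Lemma term_coef (C : numClosedFieldType) (a b c d : C) (k l p q : nat) :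
  (forall n : nat, a + n%:R != 0) ->
  (forall n : nat, 1 - a + n%:R != 0) ->
  (forall n : nat, d + n%:R != 0) ->
  (0 < l)%N -> (l <= k)%N -> (k <= p)%N ->
  term a b c d k l p q =
  Kc a b c d p q * ((-1) ^+ k * ('C(p, k))%:R * (k`!)%:R
     * ('C(q, l) * 'C(k.-1, l.-1))%:R / poch a k).
Proof.
move=> ha1 ha2 hd1 hl hlk hkp.
rewrite /term fmul_mono hkp andTb.
case: (leqP l q) => hlq; last first.
  by rewrite (bin_small hlq) mul0n mulr0n mulr0 mul0r mulr0.
rewrite fmul_xy /F11 /F21 /fneg /Kc.
have [i ->] : exists i, p = (k + i)%N by exists (p - k)%N; rewrite subnKC.
have [j ->] : exists j, q = (l + j)%N by exists (q - l)%N; rewrite subnKC.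
have [m ek] : exists m, k = (l + m)%N by exists (k - l)%N; rewrite subnKC.
case: l hl hlk hlq ek => [//|l] _ hlk hlq ek.
rewrite !addKn.
rewrite !poch_add.
have E1 := bin_fact (leq_addr i k). rewrite addKn in E1.
have E2 := bin_fact (leq_addr j l.+1). rewrite addKn in E2.
have E3 := bin_fact (leq_addr m l). rewrite addKn in E3.
have Ek1 : k.-1 = (l + m)%N by rewrite ek.
rewrite -E1 -E2 Ek1 /= -E3.
have Ekl : (k - l.+1)%N = m by rewrite ek addKn.
rewrite Ekl !natrM !exprD.
have n1 := @poch_neq0 C a k ha1.
have n2 := @poch_neq0 C (1 - a) l.+1 ha2.
have n3 := @poch_neq0 C d k hd1.
have n4 : poch (d + k%:R) i != 0.
  by apply: poch_neq0 => n; rewrite -addrA -natrD.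
have n5 : poch (1 - a + l.+1%:R) j != 0.
  by apply: poch_neq0 => n; rewrite -addrA -natrD.
have n6 : poch (a + k%:R) i != 0.
  by apply: poch_neq0 => n; rewrite -addrA -natrD.
have b1 := @bin_neq0 C _ _ (leq_addr i k).
have b2 := @bin_neq0 C _ _ (leq_addr j l.+1).
have b3 := @bin_neq0 C _ _ (leq_addr m l).
have f1 := fact_neq0 C i. have f2 := fact_neq0 C j. have f3 := fact_neq0 C k.
have f4 := fact_neq0 C l.+1. have f5 := fact_neq0 C l. have f6 := fact_neq0 C m.
have f7 : 1 + l%:R != 0 :> C by rewrite addrC natr1 pnatr_eq0.
field.
by repeat (apply/andP; split); try assumption.
Qed.

Lemma core (C : numClosedFieldType) (a b c d : C) (p q : nat) :
  (forall n : nat, a + n%:R != 0) ->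
  (forall n : nat, 1 - a + n%:R != 0) ->
  (forall n : nat, d + n%:R != 0) ->
  \sum_(1 <= k < p.+1) \sum_(1 <= l < k.+1) term a b c d k l p q
  = H11 a b c d p q
    - fmul (in_x (F11 a d)) (in_y (fneg (F21 b c (1 - a)))) p q.
Proof.
move=> ha1 ha2 hd1.
set f := fun k : nat => (-1) ^+ k * ('C(p, k))%:R * poch (q%:R : C) k / poch a k.
transitivity (Kc a b c d p q * \sum_(1 <= k < p.+1) f k).
  rewrite mulr_sumr; apply: eq_big_nat => k /andP [hk1 hkp].
  rewrite ltnS in hkp.
  transitivity (\sum_(1 <= l < k.+1) Kc a b c d p q *
     ((-1) ^+ k * ('C(p, k))%:R * (k`!)%:R
     * ('C(q, l) * 'C(k.-1, l.-1))%:R / poch a k)).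
    apply: eq_big_nat => l /andP [hl1 hlk]; rewrite ltnS in hlk.
    exact: term_coef.
  rewrite -mulr_sumr; congr (_ * _).
  rewrite /f -mulr_suml -mulr_sumr -natr_sum inner_sum // poch_nat.
  by rewrite natrM !mulrA.
have CV : \sum_(1 <= k < p.+1) f k = poch (a - q%:R) p / poch a p - 1.
  rewrite -(@chu_vandermonde C p q%:R a ha1) -/f -(big_mkord xpredT f) big_ltn //.
  rewrite /f !poch0 bin0 expr0 !mul1r invr1; ring.
rewrite CV fmul_xy /H11 /F11 /F21 /fneg /Kc.
have E := @poch_int C a p q ha2.
have n1 := @poch_neq0 C a p ha1.
have n2 := @poch_neq0 C (1 - a) q ha2.
have n3 := @poch_neq0 C d p hd1.
have f1 := fact_neq0 C p. have f2 := fact_neq0 C q.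
have -> : poch a (p%:Z - q%:Z) = (-1) ^+ q * poch (a - q%:R) p / poch (1 - a) q.
  by rewrite -E; field.
field.
by repeat (apply/andP; split); try assumption.
Qed.

From Stdlib Require Import FunctionalExtensionality.

Lemma term_zero (C : numClosedFieldType) (a b c d : C) (k l p q : nat) :
  (p < k)%N -> term a b c d k l p q = 0.
Proof. by move=> h; rewrite /term fmul_mono leqNgt h. Qed.

Theorem mainTheorem12 (C : numClosedFieldType) (a b c d : C)
  (ha : forall z : int, a != z%:~R)
  (hd : forall n : nat, d != - n%:R) :
  exists S : fps2 C,
    fps_lim (partial a b c d) S /\
    H11 a b c d =
      fadd (fmul (in_x (F11 a d)) (in_y (fneg (F21 b c (1 - a))))) S.
Proof.
have ha1 : forall n : nat, a + n%:R != 0.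
  move=> n; apply: contraNneq (ha (- n%:Z)) => h.
  by rewrite mulrNz -pmulrn -subr_eq0; apply/eqP; rewrite -h; ring.
have ha2 : forall n : nat, 1 - a + n%:R != 0.
  move=> n; apply: contraNneq (ha (n.+1%:Z)) => h.
  by rewrite -pmulrn -natr1 -subr_eq0; apply/eqP; rewrite -oppr0 -h; ring.
have hd1 : forall n : nat, d + n%:R != 0.
  move=> n; apply: contraNneq (hd n) => h.
  by rewrite -subr_eq0; apply/eqP; rewrite -h; ring.
set P0 := fmul (in_x (F11 a d)) (in_y (fneg (F21 b c (1 - a)))).
exists (fun p q => H11 a b c d p q - P0 p q); split.
  move=> p q; exists p => n hn.
  rewrite /partial -core //.
  rewrite (big_cat_nat _ (n := p.+1)) //= ?ltnS //.
  rewrite [X in _ + X]big1_seq ?addr0 // => k /andP [_].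
  rewrite mem_index_iota => /andP [hk _].
  by apply: big1_seq => l _; apply: term_zero.
apply: functional_extensionality => p; apply: functional_extensionality => q.
rewrite /fadd; ring.
Qed.
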